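(* Let $k,\ell$ be positive integers. A matroid $M$ is $(k,\ell)$-uniform if and only if every rank-$(r(M)-k)$ flat of $M$ has nullity less than $\ell$.
   Context: A matroid is $(k,\ell)$-uniform if it has no minor isomorphic to $U_{k,k}\oplus U_{0,\ell}$. The nullity of a set $X$ in $M$ is $|X|-r_M(X)$. *)

(* Defs.v *)
From mathcomp Require Import all_boot.
Set Implicit Arguments. Unset Strict Implicit. Unset Printing Implicit Defensive.

Record matroid (T : finType) := Matroid {
  ground : {set T};
  rank : {set T} -> nat;
  rank_le_card : forall X : {set T}, X \subset ground -> rank X <= #|X|;
  rank_mono : forall X Y : {set T}, X \subset Y -> Y \subset ground -> rank X <= rank Y;
  rank_submod : forall X Y : {set T}, X \subset ground -> Y \subset ground ->
    rank (X :|: Y) + rank (X :&: Y) <= rank X + rank Y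
}.

Definition matroid_rank T (M : matroid T) : nat := rank M (ground M).

Definition nullity T (M : matroid T) (X : {set T}) : nat := #|X| - rank M X.

Definition is_flat T (M : matroid T) (F : {set T}) : Prop :=
  F \subset ground M /\
  forall e : T, e \in ground M -> e \notin F -> rank M F < rank M (e |: F).

Definition uniform_rank (r n : nat) : {set 'I_n} -> nat :=
  fun X => minn #|X| r.

Definition sum_rank (T1 T2 : finType) (r1 : {set T1} -> nat)
    (r2 : {set T2} -> nat) : {set (T1 + T2)%type} -> nat :=
  fun X => r1 [set x | inl x \in X] + r2 [set y | inr y \in X].

Definition UkkU0l_rank (k l : nat) : {set ('I_k + 'I_l)%type} -> nat :=
  sum_rank (@uniform_rank k k) (@uniform_rank 0 l).

(* The rank function of the minor M / C \ D (ground set E - (C u D)):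
   r_{M/C\D}(X) = r_M(X u C) - r_M(C). *)
Definition minor_rank T (M : matroid T) (C : {set T}) (X : {set T}) : nat :=
  rank M (X :|: C) - rank M C.

Definition has_minor_iso T (M : matroid T) (T' : finType)
    (E' : {set T'}) (r' : {set T'} -> nat) : Prop :=
  exists (C D : {set T}) (f : T -> T'),
    [/\ [/\ C \subset ground M, D \subset ground M & [disjoint C & D]],
        ({in ground M :\: (C :|: D) &, injective f}),
        f @: (ground M :\: (C :|: D)) = E' &
        forall X : {set T}, X \subset ground M :\: (C :|: D) ->
          r' (f @: X) = minor_rank M C X].

Definition kl_uniform T (k l : nat) (M : matroid T) : Prop :=
  ~ has_minor_iso M [set: ('I_k + 'I_l)%type] (@UkkU0l_rank k l).

(* Main.v *)
Require Import Defs.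
From mathcomp Require Import all_boot.
From mathcomp Require Import zify.
Set Implicit Arguments. Unset Strict Implicit. Unset Printing Implicit Defensive.


Lemma r_incr T (M : matroid T) (Y Z : {set T}) :
  Y \subset ground M -> Z \subset ground M -> rank M (Y :|: Z) <= rank M Y + #|Z|.
Proof.
move=> HY HZ; have := rank_submod HY HZ; have := rank_le_card HZ; lia.
Qed.

Lemma nullity_mono T (M : matroid T) (Y X : {set T}) :
  Y \subset X -> X \subset ground M -> nullity M Y <= nullity M X.
Proof.
move=> HYX HX; rewrite /nullity.
have HXY : X :\: Y \subset ground M by apply: subset_trans HX; apply: subsetDl.
have HY : Y \subset ground M by apply: subset_trans HX.
have E : Y :|: X :\: Y = X by rewrite -{2}(setID X Y) (setIidPr HYX).
have := r_incr HY HXY; rewrite E.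
have := cardsDS HYX; have := subset_leq_card HYX.
have := rank_le_card HY. lia.
Qed.

Lemma span_lemma T (M : matroid T) (C Z : {set T}) :
  C \subset ground M -> Z \subset ground M ->
  (forall e, e \in Z -> rank M (e |: C) <= rank M C) ->
  rank M (C :|: Z) <= rank M C.
Proof.
move=> HC. move: {2}#|Z| (erefl #|Z|) => n. elim: n Z => [|n IH] Z HZn HZ Hs.
  by move/eqP: HZn; rewrite cards_eq0 => /eqP ->; rewrite setU0.
have [z Hz] : exists z, z \in Z.
  by apply/set0Pn; rewrite -card_gt0 HZn.
have HZ' : Z :\ z \subset ground M by apply: subset_trans HZ; apply: subsetDl.
have IH' := IH (Z :\ z) _ HZ' (fun e He => Hs e (subsetP (subsetDl _ _) e He)).
have {IH'} IH' : rank M (C :|: Z :\ z) <= rank M C.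
  apply: IH'; have := cardsD1 z Z; rewrite Hz; lia.
have HzC : z |: C \subset ground M.
  by rewrite subUset sub1set (subsetP HZ) // HC.
have HX : C :|: Z :\ z \subset ground M by rewrite subUset HC HZ'.
have := rank_submod HX HzC.
have -> : (C :|: Z :\ z) :|: (z |: C) = C :|: Z.
  apply/setP=> x; rewrite !inE; case: (x =P z) => [->|]; rewrite ?Hz ?orbT //=.
  move=> _; by case: (x \in C); case: (x \in Z).
have : rank M C <= rank M ((C :|: Z :\ z) :&: (z |: C)).
  apply: rank_mono; first by rewrite subsetI subsetUl subsetUr.
  by apply: subset_trans HX; apply: subsetIl.
have := Hs z Hz. lia.
Qed.
Lemma rank0 T (M : matroid T) : rank M set0 = 0.
Proof. have := rank_le_card (sub0set (ground M)); rewrite cards0; lia. Qed.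

Lemma aug_lemma T (M : matroid T) (S G : {set T}) :
  S \subset G -> G \subset ground M ->
  exists A : {set T}, [/\ A \subset G :\: S,
    rank M (S :|: A) = rank M S + #|A| & rank M (S :|: A) = rank M G].
Proof.
move=> HSG HG.
have HS : S \subset ground M by apply: subset_trans HG.
pose P := fun A : {set T} => (A \subset G :\: S) && (rank M (S :|: A) == rank M S + #|A|).
have P0 : P set0 by rewrite /P sub0set setU0 cards0 addn0 eqxx.
case: (arg_maxnP (fun A : {set T} => #|A|) P0) => A /andP [HA /eqP HrA] Hmax.
have HAG : A \subset G by exact: (subset_trans HA (subsetDl _ _)).
have HSA : S :|: A \subset ground M by rewrite subUset HS (subset_trans HAG).
have Hle : rank M (S :|: A) <= rank M G by apply: rank_mono => //; rewrite subUset HSG.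
exists A; split => //.
apply/eqP; rewrite eqn_leq Hle /=; rewrite leqNgt; apply/negP => Hlt.
case: (boolP [exists e in G, rank M (S :|: A) < rank M (e |: (S :|: A))]).
- move/exists_inP => [e He Hlt'].
  have HeSA : e \notin S :|: A.
    apply/negP => Hin; move: Hlt'.
    have -> : e |: (S :|: A) = S :|: A by apply/setUidPr; rewrite sub1set.
    by rewrite ltnn.
  have HPe : P (e |: A).
    rewrite /P; apply/andP; split.
      rewrite subUset HA sub1set in_setD He andbT.
      by move: HeSA; rewrite in_setU negb_or andbT => /andP [].
    have -> : S :|: (e |: A) = (S :|: A) :|: [set e] 
      by apply/setP => x; rewrite !inE; case: (x == e); case: (x \in S); case: (x \in A).
    have := r_incr HSA (Y := S :|: A) (Z := [set e]).
    rewrite sub1set (subsetP HG) // cards1 => /(_ isT) Hi.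
    rewrite cardsU1.
    have HeA : e \notin A by move: HeSA; rewrite in_setU negb_or => /andP [].
    rewrite HeA /=; rewrite [e |: _]setUC in Hlt'; apply/eqP; lia.
  have := Hmax _ HPe; rewrite cardsU1.
  have HeA : e \notin A by move: HeSA; rewrite in_setU negb_or => /andP [].
  by rewrite HeA /= ltnn.
- move=> Hn.
  have Hsp : forall e, e \in G -> rank M (e |: (S :|: A)) <= rank M (S :|: A).
    move=> e He; rewrite leqNgt; apply/negP => H; move/negP: Hn; apply.
    by apply/exists_inP; exists e.
  have := span_lemma HSA HG Hsp.
  have : rank M G <= rank M (S :|: A :|: G).
    by apply: rank_mono; [apply: subsetUr | rewrite !subUset HS HG (subset_trans HAG)].
  lia.
Qed.

Lemma flat_exists T (M : matroid T) (S : {set T}) (t : nat) :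
  S \subset ground M -> rank M S <= t -> t <= rank M (ground M) ->
  exists X : {set T}, [/\ S \subset X, is_flat M X & rank M X = t].
Proof.
move=> HS HSt HtE.
pose P := fun X : {set T} => [&& S \subset X, X \subset ground M & rank M X <= t].
have P0 : P S by rewrite /P subxx HS HSt.
case: (arg_maxnP (fun A : {set T} => #|A|) P0) => X /and3P [HSX HX HXt] Hmax.
have Hgt : forall e, e \in ground M -> e \notin X -> t < rank M (e |: X).
  move=> e He HeX; rewrite ltnNge; apply/negP => Hle.
  have HP : P (e |: X).
    by rewrite /P Hle (subset_trans HSX (subsetUr _ _)) subUset sub1set He HX.
  by have := Hmax _ HP; rewrite cardsU1 HeX /= ltnn.
have HXeq : rank M X = t.
  apply/eqP; rewrite eqn_leq HXt /= leqNgt; apply/negP => Hlt.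
  case: (boolP (ground M \subset X)) => Hsub.
    have : rank M (ground M) <= rank M X by apply: rank_mono.
    lia.
  move/subsetPn: Hsub => [e He HeX].
  have := Hgt e He HeX.
  have := r_incr HX (Y := X) (Z := [set e]); rewrite sub1set He cards1 => /(_ isT).
  rewrite setUC. lia.
exists X; split => //; split => // e He HeX.
by rewrite HXeq; apply: Hgt.
Qed.

Lemma subset_card T (G : {set T}) n : n <= #|G| -> exists B : {set T}, B \subset G /\ #|B| = n.
Proof.
move=> Hn.
pose P := fun B : {set T} => (B \subset G) && (#|B| <= n).
have P0 : P set0 by rewrite /P sub0set cards0.
case: (arg_maxnP (fun A : {set T} => #|A|) P0) => B /andP [HB HBn] Hmax.
exists B; split => //; apply/eqP; rewrite eqn_leq HBn /= leqNgt; apply/negP => Hlt.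
have : ~~ (G \subset B).
  apply/negP => H; have := subset_leq_card H; lia.
move/subsetPn => [e He HeB].
have HP : P (e |: B) by rewrite /P subUset sub1set He HB cardsU1 HeB.
by have := Hmax _ HP; rewrite cardsU1 HeB /= ltnn.
Qed.
Definition isl (k l : nat) (y : ('I_k + 'I_l)%type) : bool :=
  if y is inl _ then true else false.

Lemma no_minor T (k l : nat) (M : matroid T) : 0 < k ->
  (forall F : {set T}, is_flat M F -> rank M F + k = matroid_rank M ->
     nullity M F < l) -> kl_uniform k l M.
Proof.
move=> k0 Hfl [C [D [f [[HC HD HCD] Hinj Himg Hr]]]].
set E' := ground M :\: (C :|: D) in Hinj Himg Hr.
pose A := [set x in E' | isl (f x)].
pose B := [set x in E' | ~~ isl (f x)].
have HAE : A \subset E' by apply/subsetP => x; rewrite inE => /andP [].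
have HBE : B \subset E' by apply/subsetP => x; rewrite inE => /andP [].
have HE'E : E' \subset ground M by apply: subsetDl.
have HfA : f @: A = [set y | isl y].
  apply/setP => y; rewrite inE; apply/imsetP/idP.
    by move=> [x0]; rewrite inE => /andP [_ H] ->.
  move=> Hy; have : y \in f @: E' by rewrite Himg inE.
  case/imsetP => x Hx Hyx; exists x => //; by rewrite inE Hx -Hyx Hy.
have HfB : f @: B = [set y | ~~ isl y].
  apply/setP => y; rewrite inE; apply/imsetP/idP.
    by move=> [x0]; rewrite inE => /andP [_ H] ->.
  move=> Hy; have : y \in f @: E' by rewrite Himg inE.
  case/imsetP => x Hx Hyx; exists x => //; by rewrite inE Hx -Hyx Hy.
have HrA := Hr A HAE.
rewrite /UkkU0l_rank /sum_rank /uniform_rank HfA minn0 addn0 /minor_rank in HrA.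
have E1 : [set x : 'I_k | inl x \in [set y : ('I_k + 'I_l)%type | isl y]] = setT.
  by apply/setP => x; rewrite !inE.
rewrite E1 cardsT card_ord minnn in HrA.
have HrB := Hr B HBE.
rewrite /UkkU0l_rank /sum_rank /uniform_rank HfB minn0 addn0 /minor_rank in HrB.
have E2 : [set x : 'I_k | inl x \in [set y : ('I_k + 'I_l)%type | ~~ isl y]] = set0.
  by apply/setP => x; rewrite !inE.
rewrite E2 cards0 /= in HrB.
have HcB : l <= #|B|.
  apply: leq_trans (leq_imset_card f B); rewrite HfB.
  have -> : [set y : ('I_k + 'I_l)%type | ~~ isl y] = (@inr 'I_k 'I_l) @: setT.
    apply/setP => [[i|i]]; rewrite !inE /=.
      by apply/esym/imsetP => [[j _]].
    by apply/esym/imsetP; exists i.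
  rewrite card_imset ?cardsT ?card_ord //.
  by move=> x y [].
have HCB : C :&: B = set0.
  apply/setP => x; rewrite !inE; by case: (x \in C).
have HBg : B \subset ground M := subset_trans HBE HE'E.
have HAg : A \subset ground M := subset_trans HAE HE'E.
have HSg : C :|: B \subset ground M by rewrite subUset HC HBg.
have H1 : rank M (C :|: B) <= rank M C by rewrite setUC; clear -HrB; lia.
have H2 : rank M (A :|: C) <= matroid_rank M.
  by apply: rank_mono => //; rewrite subUset HAg HC.
have H3 : rank M C + k <= matroid_rank M by clear -HrA H2 k0; lia.
have H4 : rank M (C :|: B) <= matroid_rank M - k by clear -H1 H3; lia.
have H5 : matroid_rank M - k <= rank M (ground M) by rewrite /matroid_rank; clear; lia.
have [X [HSX HfX HXr]] := @flat_exists T M (C :|: B) (matroid_rank M - k) HSg H4 H5.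
have H6 : rank M X + k = matroid_rank M by rewrite HXr; clear -H3; lia.
have := Hfl X HfX H6.
have := nullity_mono HSX (proj1 HfX).
rewrite /nullity cardsU HCB cards0.
have := rank_le_card HC.
clear -H1 HcB.
lia.
Qed.
Lemma make_minor T (k l : nat) (M : matroid T) (F : {set T}) :
  F \subset ground M -> rank M F + k.+1 = matroid_rank M -> l.+1 <= nullity M F ->
  has_minor_iso M [set: ('I_k.+1 + 'I_l.+1)%type] (@UkkU0l_rank k.+1 l.+1).
Proof.
move=> HF HrF Hnul.
have [C [HC0 HrC0 HrCF]] := aug_lemma (sub0set F) HF.
rewrite set0U rank0 add0n in HrC0 HrCF; rewrite setD0 in HC0.
have [A [HA0 HrA0 HrAE]] := aug_lemma HF (subxx (ground M)).
have HCF : C \subset F := HC0.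
have HCg : C \subset ground M := subset_trans HCF HF.
have HcA : #|A| = k.+1 by move: HrAE; rewrite /matroid_rank in HrF; lia.
have [B [HBFC HcB]] : exists B : {set T}, B \subset F :\: C /\ #|B| = l.+1.
  apply: subset_card; rewrite cardsDS //; move: Hnul; rewrite /nullity; lia.
have HAg : A \subset ground M := subset_trans HA0 (subsetDl _ _).
have HBF : B \subset F := subset_trans HBFC (subsetDl _ _).
have HBg : B \subset ground M := subset_trans HBF HF.
have hA : forall x, x \in A -> (x \in ground M) && (x \notin F).
  by move=> x /(subsetP HA0); rewrite inE andbC.
have hB : forall x, x \in B -> (x \in F) && (x \notin C).
  by move=> x /(subsetP HBFC); rewrite inE andbC.
have hC : forall x, x \in C -> x \in F by apply/subsetP.
have hF : forall x, x \in F -> x \in ground M by apply/subsetP.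
pose D := ground M :\: (C :|: (A :|: B)).
pose f := fun x : T => if x \in A then @inl 'I_k.+1 'I_l.+1 (inord (index x (enum A)))
                                   else @inr 'I_k.+1 'I_l.+1 (inord (index x (enum B))).
have HE' : ground M :\: (C :|: D) = A :|: B.
  apply/setP => x; rewrite !inE.
  case HxA: (x \in A).
    move: (hA x HxA) => /andP [-> HnF].
    have -> : (x \in C) = false by apply/negP => /hC; rewrite (negbTE HnF).
    done.
  case HxB: (x \in B).
    move: (hB x HxB) => /andP [HxF HnC].
    by rewrite (negbTE HnC) (hF x HxF).
  by case: (x \in C); case: (x \in ground M).
have HAB : A :&: B = set0.
  apply/setP => x; rewrite !inE; case HxA: (x \in A) => //=.
  apply/negP => /hB /andP [HxF _]; move: (hA x HxA) => /andP [_].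
  by rewrite HxF.
have Hinj : {in A :|: B &, injective f}.
  move=> x y; rewrite !inE /f => Hx Hy.
  have idxA : forall z, z \in A -> index z (enum A) < k.+1.
    by move=> z Hz; rewrite -HcA cardE index_mem mem_enum.
  have idxB : forall z, z \in B -> index z (enum B) < l.+1.
    by move=> z Hz; rewrite -HcB cardE index_mem mem_enum.
  case HxA: (x \in A); case HyA: (y \in A) => H; case: H => //.
  - move/(congr1 (@nat_of_ord _)); rewrite !inordK ?idxA // => Hi.
    by rewrite -(nth_index x (s := enum A) (x := x)) ?mem_enum // Hi nth_index ?mem_enum.
  - rewrite HxA HyA /= in Hx Hy.
    move/(congr1 (@nat_of_ord _)); rewrite !inordK ?idxB // => Hi.
    by rewrite -(nth_index x (s := enum B) (x := x)) ?mem_enum // Hi nth_index ?mem_enum.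
exists C, D, f; split.
- split => //; first exact: subsetDl.
  rewrite disjoints_subset; apply/subsetP => x HxC; by rewrite !inE HxC.
- by rewrite HE'.
- rewrite HE'; apply/eqP; rewrite eqEcard subsetT cardsT card_sum !card_ord card_in_imset //.
  by rewrite cardsU HAB cards0 HcA HcB subn0 leqnn.
move=> X; rewrite HE' => HX.
rewrite /UkkU0l_rank /sum_rank /uniform_rank minn0 addn0 /minor_rank.
have E3 : (@inl 'I_k.+1 'I_l.+1) @: [set i | inl i \in f @: X] = f @: (A :&: X).
  apply/setP => y; apply/imsetP/imsetP.
    move=> [i]; rewrite inE => /imsetP [x Hx Hfx] ->.
    have HxA : x \in A.
      apply/negPn/negP => HnA; move: Hfx; by rewrite /f (negbTE HnA).
    by exists x => //; rewrite inE HxA Hx.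
  move=> [x]; rewrite inE => /andP [HxA Hx] ->.
  exists (inord (index x (enum A))); last by rewrite /f HxA.
  by rewrite inE; apply/imsetP; exists x => //; rewrite /f HxA.
have Hc : #|[set i | inl i \in f @: X]| = #|A :&: X|.
  rewrite -(card_imset _ (@inl_inj 'I_k.+1 'I_l.+1)) E3 card_in_imset //.
  apply: (sub_in2 _ Hinj) => z; rewrite !inE => /andP [-> _] //.
rewrite Hc.
have -> : minn #|A :&: X| k.+1 = #|A :&: X|.
  by apply/minn_idPl; rewrite -HcA subset_leq_card // subsetIl.
have gAX : A :&: X \subset ground M := subset_trans (subsetIl _ _) HAg.
have gADX : A :\: X \subset ground M := subset_trans (subsetDl _ _) HAg.
have gBX : B :&: X \subset ground M := subset_trans (subsetIl _ _) HBg.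
have gX : X \subset ground M by apply: subset_trans HX _; rewrite subUset HAg HBg.
have gFA : F :|: A :&: X \subset ground M by rewrite subUset HF gAX.
have gCA : C :|: A :&: X \subset ground M by rewrite subUset HCg gAX.
have gCB : C :|: B :&: X \subset ground M by rewrite subUset HCg gBX.
have cAX := cardsID X A.
have i1 : rank M (F :|: A) <= rank M ((F :|: A :&: X) :|: (A :\: X)).
  apply: rank_mono; last by rewrite !subUset HF gAX gADX.
  apply/subsetP => x; rewrite !inE; case: (x \in F); case: (x \in A); by case: (x \in X).
have i2 := r_incr gFA gADX.
have ii1 := rank_submod gCA HF.
have ii2 : rank M (F :|: A :&: X) <= rank M ((C :|: A :&: X) :|: F).
  apply: rank_mono; last by rewrite subUset gCA HF.
  apply/subsetP => x; rewrite !inE; case: (x \in F); case: (x \in A); case: (x \in C); by case: (x \in X).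
have ii3 : rank M C <= rank M ((C :|: A :&: X) :&: F).
  apply: rank_mono; last by apply: subset_trans (subsetIr _ _) HF.
  by apply/subsetP => x Hx; rewrite !inE Hx (hC x Hx).
have iii := r_incr HCg gAX.
have iv1 := rank_submod gCA gCB.
have iv2 : rank M (X :|: C) <= rank M ((C :|: A :&: X) :|: (C :|: B :&: X)).
  apply: rank_mono; last by rewrite !subUset HCg gAX gBX.
  apply/subsetP => x; rewrite !inE; case/orP => [Hx|->]; last by rewrite orbT.
  have := subsetP HX x Hx; rewrite !inE Hx; case/orP => ->; by rewrite ?orbT.
have iv3 : rank M C <= rank M ((C :|: A :&: X) :&: (C :|: B :&: X)).
  apply: rank_mono; last by apply: subset_trans (subsetIl _ _) gCA.
  by apply/subsetP => x Hx; rewrite !inE Hx.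
have iv4 : rank M (C :|: B :&: X) <= rank M F.
  apply: rank_mono => //; rewrite subUset HCF.
  exact: subset_trans (subsetIl _ _) HBF.
have iv5 : rank M (C :|: A :&: X) <= rank M (X :|: C).
  apply: rank_mono; last by rewrite subUset gX HCg.
  apply/subsetP => x; rewrite !inE; case: (x \in C); case: (x \in A); by case: (x \in X).
clear -HrCF HrA0 cAX i1 i2 ii1 ii2 ii3 iii iv1 iv2 iv3 iv4 iv5.
lia.
Qed.

Theorem proposition1p4 (T : finType) (k l : nat) (M : matroid T) :
  0 < k -> 0 < l ->
  (kl_uniform k l M <->
   forall F : {set T}, is_flat M F -> rank M F + k = matroid_rank M ->
     nullity M F < l).
Proof.
move=> k0 l0; split; last exact: no_minor.
move=> Hu F HF HrF; rewrite ltnNge; apply/negP => Hnul; apply: Hu.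
move: k0 l0 HrF Hnul; case: k => [//|k] _; case: l => [//|l] _ HrF Hnul.
exact: make_minor (proj1 HF) HrF Hnul.
Qed.
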